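(* Let $n\ge 1$. There is exactly one rooted binary tree (up to isomorphism) with $n$ leaves of minimal Sackin index if and only if there exists an integer $m\ge 0$ with $n\in\{2^m-1,\,2^m,\,2^m+1\}$.
   Context: A rooted binary tree is either a single vertex (both root and leaf), or a finite tree with a distinguished root of degree 2 whose other non-leaf vertices have degree 3; trees are considered up to isomorphism of rooted trees (leaves unlabeled). The Sackin index is $\mathcal S(T)=\sum_{x\text{ leaf}}\delta_x$, with $\delta_x$ the number of edges from the root to $x$. *)

(* Defs.v *)
From mathcomp Require Import all_boot.
Set Implicit Arguments. Unset Strict Implicit. Unset Printing Implicit Defensive.

(* Rooted binary trees: a single vertex (Leaf) or a root with two
   (unordered, up to isomorphism) subtrees. *)
Inductive btree : Type :=
| Leaf : btree
| Node : btree -> btree -> btree.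

Fixpoint nleaves (t : btree) : nat :=
  match t with
  | Leaf => 1
  | Node l r => nleaves l + nleaves r
  end.

Fixpoint leaf_depths (t : btree) : seq nat :=
  match t with
  | Leaf => [:: 0]
  | Node l r => map S (leaf_depths l ++ leaf_depths r)
  end.

Definition sackin (t : btree) : nat := sumn (leaf_depths t).

Fixpoint tree_iso (t u : btree) : bool :=
  match t, u with
  | Leaf, Leaf => true
  | Node a b, Node c d =>
      (tree_iso a c && tree_iso b d) || (tree_iso a d && tree_iso b c)
  | _, _ => false
  end.

Definition sackin_minimal (n : nat) (t : btree) : Prop :=
  nleaves t = n /\ forall u, nleaves u = n -> sackin t <= sackin u.

Definition unique_sackin_min (n : nat) : Prop :=
  (exists t, sackin_minimal n t) /\
  (forall t u, sackin_minimal n t -> sackin_minimal n u -> tree_iso t u).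

(* Main.v *)
Require Import Defs.
From mathcomp Require Import all_boot.
From mathcomp Require Import zify.

Lemma sumn_mapS (s : seq nat) : sumn (map S s) = sumn s + size s.
Proof. elim: s => [|x s IH] //=; rewrite IH; lia. Qed.

Lemma size_ld t : size (leaf_depths t) = nleaves t.
Proof. elim: t => [|l IHl r IHr] //=; rewrite size_map size_cat IHl IHr. by []. Qed.

Lemma sackin_Node l r :
  sackin (Node l r) = sackin l + sackin r + nleaves l + nleaves r.
Proof.
rewrite /sackin /= sumn_mapS sumn_cat size_cat !size_ld; lia.
Qed.

Lemma sackin_Leaf : sackin Leaf = 0. Proof. by []. Qed.

Lemma nleaves_pos t : 0 < nleaves t.
Proof. elim: t => [|l IHl r IHr] //=; lia. Qed.

Lemma pow2_pos k : 0 < 2 ^ k.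
Proof. by rewrite expn_gt0. Qed.

Lemma k2_le k : k + 2 <= 2 * 2 ^ k.
Proof. elim: k => [|k IH] //; rewrite expnS; lia. Qed.

Lemma lower t k : (k + 2) * nleaves t <= sackin t + 2 * 2 ^ k.
Proof.
elim: t k => [|l IHl r IHr] k.
  rewrite sackin_Leaf /=; have := k2_le k; lia.
rewrite sackin_Node /=.
have hl := nleaves_pos l; have hr := nleaves_pos r.
case: k => [|k].
  have := IHl 0; have := IHr 0; rewrite expn0; lia.
have := IHl k; have := IHr k; rewrite expnS; lia.
Qed.

Definition tight k t := sackin t + 2 * 2 ^ k = (k + 2) * nleaves t.

Lemma exist_tight k n : 2 ^ k <= n <= 2 * 2 ^ k ->
  exists t, nleaves t = n /\ tight k t.
Proof.
elim: k n => [|k IH] n.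
  rewrite expn0 => /andP [h1 h2].
  have [->|->] : n = 1 \/ n = 2 by lia.
    by exists Leaf.
  by exists (Node Leaf Leaf).
rewrite expnS => /andP [h1 h2].
have hP := pow2_pos k.
have [ta [ha ta_t]] := IH (n %/ 2) (ltac:(apply/andP; split; lia)).
have [tb [hb tb_t]] := IH (n - n %/ 2) (ltac:(apply/andP; split; lia)).
exists (Node ta tb); split; first by rewrite /= ha hb; lia.
move: ta_t tb_t; rewrite /tight sackin_Node /= ha hb expnS; lia.
Qed.
Arguments exist_tight {k n}.

Lemma tight_bounds k t : tight k t -> 2 ^ k <= nleaves t <= 2 * 2 ^ k.
Proof.
rewrite /tight => h; apply/andP; split.
  case: k h => [|k] h; first by rewrite expn0; exact: nleaves_pos.
  have := lower t k; move: h; rewrite expnS; lia.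
have := lower t k.+1; move: h; rewrite expnS; lia.
Qed.
Arguments tight_bounds {k t}.

Lemma tight_children k l r : tight k.+1 (Node l r) -> tight k l /\ tight k r.
Proof.
rewrite /tight sackin_Node /= expnS => h.
have := lower l k; have := lower r k; move: h; lia.
Qed.
Arguments tight_children {k l r}.

Lemma iso_nleaves t u : tree_iso t u -> nleaves t = nleaves u.
Proof.
elim: t u => [|a IHa b IHb] [|c d] //= /orP [/andP [h1 h2]|/andP [h1 h2]].
  by rewrite (IHa _ h1) (IHb _ h2).
by rewrite (IHa _ h1) (IHb _ h2) addnC.
Qed.
Arguments iso_nleaves {t u}.

Lemma nl1 t : nleaves t = 1 -> t = Leaf.
Proof.
case: t => //= l r; have := nleaves_pos l; have := nleaves_pos r; lia.
Qed.

Lemma nl2 t : nleaves t = 2 -> t = Node Leaf Leaf.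
Proof.
case: t => //= l r h; have := nleaves_pos l; have := nleaves_pos r => h1 h2.
have e1 : nleaves l = 1 by lia.
have e2 : nleaves r = 1 by lia.
by rewrite (@nl1 _ e1) (@nl1 _ e2).
Qed.


Definition inset k n := n = 2 ^ k \/ n = 2 ^ k + 1 \/ n = 2 * 2 ^ k - 1 \/ n = 2 * 2 ^ k.

Lemma uniq_tight k : forall t u, tight k t -> tight k u ->
  nleaves t = nleaves u -> inset k (nleaves t) -> tree_iso t u.
Proof.
elim: k => [|k IH] t u ht hu e hs.
  have := tight_bounds ht; have := tight_bounds hu; rewrite expn0 => hbu hbt.
  have [h|h] : nleaves t = 1 \/ nleaves t = 2 by lia.
    by rewrite (@nl1 _ h) (@nl1 _ (etrans (esym e) h)).
  by rewrite (@nl2 _ h) (@nl2 _ (etrans (esym e) h)).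
have hP := pow2_pos k.
have := tight_bounds ht; rewrite expnS => hbt.
case: t ht e hs hbt => [|l r] ht e hs hbt; first by (simpl in hbt; lia).
case: u hu e => [|c d] hu e; first by (simpl in e, hbt; lia).
have [hl hr] := tight_children ht; have [hc hd] := tight_children hu.
have := tight_bounds hl; have := tight_bounds hr.
have := tight_bounds hc; have := tight_bounds hd.
move: e hs; rewrite /inset /= expnS => e hs b1 b2 b3 b4.
have [[e1 e2]|[e1 e2]] :
  (nleaves l = nleaves c /\ nleaves r = nleaves d) \/
  (nleaves l = nleaves d /\ nleaves r = nleaves c) by lia.
  apply/orP; left; apply/andP; split.
    by apply: IH => //; rewrite /inset; lia.
  by apply: IH => //; rewrite /inset; lia.
apply/orP; right; apply/andP; split.
  by apply: IH => //; rewrite /inset; lia.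
by apply: IH => //; rewrite /inset; lia.
Qed.

Lemma min_tight n t k : sackin_minimal n t -> 2 ^ k <= n <= 2 * 2 ^ k -> tight k t.
Proof.
move=> [hn hm] hk; have [t0 [h0 ht0]] := exist_tight hk.
have := hm t0 h0; have := lower t k; move: ht0; rewrite /tight hn h0; lia.
Qed.
Arguments min_tight {n t k}.


Theorem mainTheorem14 (n : nat) (hn : 1 <= n) :
  unique_sackin_min n <->
  exists m : nat, n = 2 ^ m - 1 \/ n = 2 ^ m \/ n = 2 ^ m + 1.
Proof.
split.
  move=> [_ hu].
  set k := trunc_log 2 n.
  have hk1 : 2 ^ k <= n by apply: trunc_logP.
  have hk2 : n < 2 ^ k.+1 by apply: trunc_log_ltn.
  move: hk2; rewrite expnS => hk2.
  have [h|h] : (n = 2 ^ k \/ n = 2 ^ k + 1 \/ n = 2 * 2 ^ k - 1) \/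
      (2 ^ k + 2 <= n <= 2 * 2 ^ k - 2) by lia.
    case: h => [h|[h|h]]; [exists k | exists k | exists k.+1]; rewrite ?expnS; lia.
  exfalso.
  case: k hk1 hk2 h => [|[|j]] hk1 hk2 h.
  - move: h; rewrite expn0; lia.
  - move: h; rewrite expn1; lia.
  rewrite !expnS in hk1 hk2 h.
  have hP := pow2_pos j.
  set a := n %/ 2.
  have [ha1 ha2] : 2 * a <= n /\ n <= 2 * a + 1 by rewrite /a; lia.
  clearbody a.
  have [ta [ha hta]] := @exist_tight j.+1 a (ltac:(rewrite expnS; apply/andP; split; lia)).
  have [tb [hb htb]] := @exist_tight j.+1 (n - a) (ltac:(rewrite expnS; apply/andP; split; lia)).
  have [tc [hc htc]] := @exist_tight j.+1 (a - 1) (ltac:(rewrite expnS; apply/andP; split; lia)).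
  have [td [hd htd]] := @exist_tight j.+1 (n - a + 1) (ltac:(rewrite expnS; apply/andP; split; lia)).
  have mk : forall x y, nleaves x + nleaves y = n -> tight j.+1 x -> tight j.+1 y ->
      sackin_minimal n (Node x y).
    move=> x y hxy hx hy; split => // v hv.
    have := lower v j.+2; move: hx hy; rewrite /tight sackin_Node hv !expnS.
    lia.
  have m1 := mk ta tb ltac:(lia) hta htb.
  have m2 := mk tc td ltac:(lia) htc htd.
  move: (hu _ _ m1 m2) => /= /orP [/andP [h1 h2]|/andP [h1 h2]].
    move: (iso_nleaves h1); lia.
  move: (iso_nleaves h1); lia.
move=> [m hm].
have [k [hk hs]] : exists k, 2 ^ k <= n <= 2 * 2 ^ k /\ inset k n.
  case: hm => [h|[h|h]].
  - case: m h => [|m] h; first by move: h hn; rewrite expn0; lia.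
    exists m; move: h; rewrite /inset expnS; have := pow2_pos m; lia.
  - exists m; rewrite /inset; have := pow2_pos m; lia.
  - exists m; rewrite /inset; have := pow2_pos m; lia.
split.
  have [t [ht1 ht2]] := exist_tight hk.
  exists t; split => // u hu.
  have := lower u k; move: ht2; rewrite /tight ht1 hu; lia.
move=> t u ht hu.
apply: uniq_tight.
- exact: min_tight ht hk.
- exact: min_tight hu hk.
- by rewrite ht.1 hu.1.
- by rewrite ht.1.
Qed.
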